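(* Let $t\ge2$, $n\ge1$, let $\lambda$ be a partition of length at most $tn+1$ and write $n_i=n_i(\lambda,tn+1)$. Then the following are equivalent: (a) there exists $i_0\in\{1,\dots,\lfloor t/2\rfloor\}$ such that $n_0=n$ and, for all $1\le i\le\lfloor t/2\rfloor$, $n_i+n_{t-i}=2n+1+\delta_{i_0,t/2}$ if $i=i_0$ and $n_i+n_{t-i}=2n$ otherwise; (b) the $t$-core of $\lambda$ is a $(1,0,k)$-asymmetric partition for some $1\le k\le\mathrm{rk}(\text{$t$-core of }\lambda)$.
   Context: For a partition $\lambda$ of length at most $\ell$, $\beta_i(\lambda,\ell)=\lambda_i+\ell-i$ and $n_i(\lambda,\ell)$ is the number of $\beta_j(\lambda,\ell)$ congruent to $i$ mod $t$ ($0\le i\le t-1$). The $t$-core is the usual one. Rank $\mathrm{rk}(\mu)=\max\{j:\mu_j\ge j\}$; Frobenius coordinates $(\alpha\mid\beta)$, $\alpha_i=\mu_i-i$, $\beta_i=\mu'_i-i$. For integers $z_1>z_2\ge0$ and $1\le k\le r=\mathrm{rk}(\mu)$, $\mu$ is $(z_1,z_2,k)$-asymmetric if $\mu=(\alpha_1,\dots,\alpha_r\mid\alpha_1+z_1,\dots,\widehat{\alpha_k+z_1},\dots,\alpha_r+z_1,z_2)$ for some strict partition $\alpha$ (hat = omission). *)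

(* Defs.v *)
From mathcomp Require Import all_boot.
Set Implicit Arguments.
Unset Strict Implicit.
Unset Printing Implicit Defensive.

(* A partition: a weakly decreasing list of positive integers
   (lambda_1 >= lambda_2 >= ... > 0).  lambda_i (1-indexed) is
   [nth 0 la i.-1]; parts beyond the length are 0. *)
Definition is_partition (la : seq nat) : bool :=
  sorted geq la && all (fun x => 0 < x) la.

Definition part (la : seq nat) (i : nat) : nat := nth 0 la i.-1.

Definition beta (la : seq nat) (l i : nat) : nat := part la i + l - i.

Definition nres (t : nat) (la : seq nat) (l r : nat) : nat :=
  count (fun j => beta la l j %% t == r) (iota 1 l).

(* cell (i,j), 0-indexed row i and column j, lies in the diagram of la *)
Definition in_diag (la : seq nat) (c : nat * nat) : bool :=
  c.2 < nth 0 la c.1.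

Definition skew_cells (la mu : seq nat) : seq (nat * nat) :=
  [seq c <- [seq (i, j) | i <- iota 0 (size la), j <- iota 0 (nth 0 la i)]
     | ~~ in_diag mu c].

Definition adj_cell (c d : nat * nat) : bool :=
  ((c.1 == d.1) && ((c.2 == d.2.+1) || (d.2 == c.2.+1))) ||
  ((c.2 == d.2) && ((c.1 == d.1.+1) || (d.1 == c.1.+1))).

Definition rim_hook_removal (t : nat) (la mu : seq nat) : Prop :=
  [/\ is_partition mu,
      (forall i, nth 0 mu i <= nth 0 la i),
      sumn la = sumn mu + t,
      (forall a b, a \in skew_cells la mu -> b \in skew_cells la mu ->
         exists p : seq (nat * nat),
           [&& path adj_cell a p, all (mem (skew_cells la mu)) p &
               last a p == b])
    & ~ (exists i j, [/\ (i, j) \in skew_cells la mu,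
                         (i.+1, j) \in skew_cells la mu,
                         (i, j.+1) \in skew_cells la mu &
                         (i.+1, j.+1) \in skew_cells la mu])].

Definition is_tcore (t : nat) (la : seq nat) : Prop :=
  ~ (exists mu, rim_hook_removal t la mu).

Inductive hooks_removed (t : nat) : seq nat -> seq nat -> Prop :=
  | hr_refl la : hooks_removed t la la
  | hr_step la mu nu :
      rim_hook_removal t la mu -> hooks_removed t mu nu -> hooks_removed t la nu.

Definition tcore_of (t : nat) (la c : seq nat) : Prop :=
  hooks_removed t la c /\ is_tcore t c.

Definition rk (mu : seq nat) : nat :=
  \max_(0 <= j < (size mu).+1 | j <= part mu j) j.

Definition conj_part (mu : seq nat) (i : nat) : nat :=
  count (fun x => i <= x) mu.

Definition frob_arm (mu : seq nat) : seq nat :=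
  [seq part mu i - i | i <- iota 1 (rk mu)].
Definition frob_leg (mu : seq nat) : seq nat :=
  [seq conj_part mu i - i | i <- iota 1 (rk mu)].

(* mu is (z1,z2,k)-asymmetric:
   mu = (alpha_1,..,alpha_r | alpha_1+z1, .., ^(alpha_k+z1), .., alpha_r+z1, z2)
   for some strict partition alpha, where r = rk mu. *)
Definition asymmetric (z1 z2 k : nat) (mu : seq nat) : Prop :=
  z2 < z1 /\ 1 <= k <= rk mu /\
  exists alpha : seq nat,
    [/\ sorted gtn alpha, size alpha = rk mu,
        frob_arm mu = alpha &
        frob_leg mu =
          rcons [seq a + z1 | a <- take k.-1 alpha ++ drop k alpha] z2].

(* Main.v *)
Require Import Defs.
From mathcomp Require Import all_boot.
From mathcomp Require Import zify.
Set Implicit Arguments.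
Unset Strict Implicit.
Unset Printing Implicit Defensive.

Lemma part_le la i j : is_partition la -> i <= j -> nth 0 la j <= nth 0 la i.
Proof.
case/andP=> so _ ij.
case: (ltnP j (size la)) => hj; last by rewrite nth_default.
have tr : transitive geq by move=> a b c /= h1 h2; apply: leq_trans h2 h1.
have := sorted_leq_nth tr (fun a => leqnn a) 0 so; apply => //.
by rewrite inE; apply: leq_ltn_trans hj.
Qed.

Lemma part_pos la k : is_partition la -> (0 < nth 0 la k) = (k < size la).
Proof.
case/andP=> _ /allP pos.
case: (ltnP k (size la)) => hk; last by rewrite nth_default.
by rewrite pos // mem_nth.
Qed.

Lemma size_sub la mu : is_partition mu ->
  (forall i, nth 0 mu i <= nth 0 la i) -> size mu <= size la.
Proof.
move=> pm le; case: (posnP (size mu)) => [->//|h].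
have hh : 0 < nth 0 mu (size mu).-1 by rewrite part_pos // prednK.
have := leq_trans hh (le (size mu).-1).
case: (ltnP (size mu).-1 (size la)) => h2.
  by move=> _; rewrite -(prednK h).
by rewrite nth_default.
Qed.

Definition bead (la : seq nat) (l k : nat) := beta la l k.+1.
Definition bs (la : seq nat) (l : nat) := [seq bead la l k | k <- iota 0 l].

Lemma beadE la l k : k < l -> bead la l k = nth 0 la k + (l - k.+1).
Proof. by move=> h; rewrite /bead /beta /part /=; lia. Qed.

Lemma nres_bs t la l r : nres t la l r = count (fun x => x %% t == r) (bs la l).
Proof.
rewrite /nres /bs count_map -(addn0 1) iotaDl count_map; apply: eq_count => k /=.
by [].
Qed.

Lemma mem_bs la l x : (x \in bs la l) = has (fun k => bead la l k == x) (iota 0 l).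
Proof.
apply/mapP/hasP => [[k hk ->]|[k hk /eqP <-]]; by exists k.
Qed.

Lemma bead_lt la l j k : is_partition la -> j < k -> k < l -> bead la l k < bead la l j.
Proof.
move=> p jk kl; rewrite !beadE //; last by apply: ltn_trans kl.
have := part_le p (ltnW jk); lia.
Qed.

Lemma bead_inj la l j k : is_partition la -> j < l -> k < l -> bead la l j = bead la l k -> j = k.
Proof.
move=> p jl kl e; case: (ltngtP j k) => // h.
- by have := bead_lt p h kl; rewrite e ltnn.
- by have := bead_lt p h jl; rewrite e ltnn.
Qed.

Lemma uniq_bs la l : is_partition la -> uniq (bs la l).
Proof.
move=> p; rewrite map_inj_in_uniq ?iota_uniq // => j k; rewrite !mem_iota /= !add0n.
by move=> jl kl; apply: bead_inj.
Qed.

Lemma size_bs la l : size (bs la l) = l.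
Proof. by rewrite size_map size_iota. Qed.

Lemma mem_skew la mu u :
  (u \in skew_cells la mu) = (nth 0 mu u.1 <= u.2) && (u.2 < nth 0 la u.1).
Proof.
case: u => a b /=; rewrite /skew_cells mem_filter /in_diag /= -leqNgt.
case: (leqP (nth 0 mu a) b) => //= _.
apply/allpairsPdep/idP => [[x [y [hx hy [-> ->]]]]|h].
  by move: hy; rewrite mem_iota.
exists a, b; split => //; rewrite mem_iota //= add0n.
case: (ltnP a (size la)) => // ha; by move: h; rewrite nth_default.
Qed.

Lemma sumn_nth s n : size s <= n -> sumn s = \sum_(0 <= k < n) nth 0 s k.
Proof.
elim: s n => [|a s IH] n /=.
  by move=> _; rewrite big1 // => k _; rewrite nth_nil.
case: n => // n hn; rewrite big_nat_recl //= (IH n) //.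
Qed.

Lemma sum_sub (L M : nat -> nat) a b : (forall k, M k <= L k) ->
  \sum_(a <= k < b) L k = \sum_(a <= k < b) M k + \sum_(a <= k < b) (L k - M k).
Proof.
move=> h; rewrite -big_split /=; apply: eq_bigr => k _; by rewrite subnKC.
Qed.

Lemma tele (L M : nat -> nat) i d :
  (forall k, i <= k < i + d -> M k + 1 = L k.+1) ->
  (forall k, M k <= L k) -> (forall k, L k.+1 <= L k) ->
  \sum_(i <= k < (i + d).+1) (L k - M k) = L i + d - M (i + d).
Proof.
move=> hM hle hdec; elim: d hM => [|d IH] hM.
  by rewrite !addn0 big_nat1.
rewrite addnS big_nat_recr /=; last by lia.
rewrite IH; last by move=> k hk; apply: hM; lia.
have e := hM (i + d).
have hL : forall k, L (i + k) <= L i.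
  elim=> [|k IHk]; first by rewrite addn0.
  by rewrite addnS; apply: leq_trans (hdec _) IHk.
have := hle (i + d); have := hle (i + d).+1; have := hL d; have := hL d.+1.
rewrite addnS; move: e; rewrite addnS; lia.
Qed.

Lemma iota_split a b c : a <= b -> b <= c ->
  iota a (c - a) = iota a (b - a) ++ iota b (c - b).
Proof.
move=> ab bc; have -> : c - a = (b - a) + (c - b) by lia.
by rewrite iotaD subnKC.
Qed.

Section Sep.
Variables (la mu : seq nat) (k : nat).
Hypothesis hsep : nth 0 la k.+1 <= nth 0 mu k.

Lemma sep_path p u : path adj_cell u p -> all (mem (skew_cells la mu)) p ->
  u \in skew_cells la mu -> u.1 <= k -> (last u p).1 <= k.
Proof.
elim: p u => [//|v p IH] u /= /andP[huv hp] /andP[hv hall] hu hk.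
suff hv1 : v.1 <= k by apply: IH.
move: huv hu hv {hp hall}; case: u hk => u1 u2; case: v => v1 v2 /= hk.
rewrite !mem_skew /adj_cell /=.
case: (ltngtP u1 k) => hk'.
- lia.
- lia.
- subst u1; move=> h1 h2 h3; case: (leqP v1 k) => // hv.
  have ev : v1 = k.+1 by lia.
  subst v1; move: hsep; lia.
Qed.
End Sep.

Lemma rim_struct t la mu : 0 < t -> is_partition la -> rim_hook_removal t la mu ->
  exists i j, [/\ i <= j < size la,
    (forall k, k < i \/ j < k -> nth 0 mu k = nth 0 la k),
    (forall k, i <= k < j -> nth 0 mu k + 1 = nth 0 la k.+1) &
    nth 0 la i + (j - i) - nth 0 mu j = t].
Proof.
move=> t0 pla [pmu sub hsum conn no22].
have smu := size_sub pmu sub.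
pose P k := nth 0 mu k < nth 0 la k.
have exP : exists k, P k.
  case: (boolP (has P (iota 0 (size la)))) => [/hasP[k _ hk]|/hasPn hn]; first by exists k.
  exfalso; suff e : sumn la = sumn mu by move: hsum; rewrite e; lia.
  rewrite (@sumn_nth la (size la)) // (@sumn_nth mu (size la)) //.
  apply: eq_big_nat => k hk; apply/eqP; rewrite eqn_leq sub /=.
  by have := hn k; rewrite mem_iota /P; lia.
have ubP : forall k, P k -> k <= size la.
  move=> k; rewrite /P => h; apply: ltnW; rewrite -part_pos //; lia.
case: (ex_minnP exP) => i Pi mini.
case: (ex_maxnP exP ubP) => j Pj maxj.
have ij : i <= j by apply: mini.
have jl : j < size la by rewrite -part_pos //; move: Pj; rewrite /P; lia.
have h1 : forall k, k < i \/ j < k -> nth 0 mu k = nth 0 la k.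
  move=> k hk; apply/eqP; rewrite eqn_leq sub /= leqNgt; apply/negP => Pk.
  case: hk => hk; [have := mini k Pk | have := maxj k Pk]; lia.
have h2 : forall k, i <= k < j -> nth 0 mu k + 1 = nth 0 la k.+1.
  move=> k hk.
  have a1 : nth 0 mu k < nth 0 la k.+1.
    rewrite ltnNge; apply/negP => hsep.
    have ha : (i, nth 0 mu i) \in skew_cells la mu by rewrite mem_skew /= leqnn.
    have hb : (j, nth 0 mu j) \in skew_cells la mu by rewrite mem_skew /= leqnn.
    case: (conn _ _ ha hb) => p /and3P[hp hall /eqP hl].
    have := sep_path hsep hp hall ha; rewrite hl /=; lia.
  have a2 : nth 0 la k.+1 <= nth 0 mu k + 1.
    rewrite leqNgt; apply/negP => hbig; apply: no22.
    have := part_le pla (leqnSn k); have := part_le pmu (leqnSn k) => m1 l1.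
    exists k, (nth 0 mu k); rewrite !mem_skew /=; split; lia.
  lia.
exists i, j; split; [by rewrite ij jl | exact: h1 | exact: h2 |].
have hs : \sum_(0 <= k < size la) (nth 0 la k - nth 0 mu k) =
    nth 0 la i + (j - i) - nth 0 mu j.
  rewrite (@big_cat_nat _ _ _ i) //=; last by lia.
  rewrite (@big_cat_nat _ _ _ j.+1 i) //=.
  rewrite (@big1_seq _ _ _ _ (index_iota 0 i)); last first.
    by move=> k /andP[_]; rewrite mem_index_iota => hk; rewrite h1 ?subnn //; left; lia.
  rewrite (@big1_seq _ _ _ _ (index_iota j.+1 (size la))); last first.
    by move=> k /andP[_]; rewrite mem_index_iota => hk; rewrite h1 ?subnn //; right; lia.
  have ej : j = i + (j - i) by lia.
  rewrite add0n addn0 {1}ej (@tele (nth 0 la) (nth 0 mu) i (j - i)) -?ej //.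
  all: try by move=> k; exact: part_le pla (leqnSn k).
  by lia.
move: hsum; rewrite (@sumn_nth la (size la)) // (@sumn_nth mu (size la)) //.
rewrite (@sum_sub (nth 0 la) (nth 0 mu)) // hs; lia.
Qed.

Lemma rim_nres t la mu l : 0 < t -> is_partition la -> size la <= l ->
  rim_hook_removal t la mu -> forall r, nres t la l r = nres t mu l r.
Proof.
move=> t0 pla sl rh r; have [i [j [/andP[ij jla] h1 h2 h3]]] := rim_struct t0 pla rh.
have jl : j < l by lia.
rewrite !nres_bs /bs.
have e1 : iota 0 l = iota 0 i ++ iota i (j - i) ++ j :: iota j.+1 (l - j.+1).
  have -> : l = i + ((j - i) + (1 + (l - j.+1))) by lia.
  rewrite !iotaD !add0n (subnKC ij) /= addn1.
  by congr (_ ++ _ ++ _ :: iota _ _); lia.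
have e2 : iota 0 l = iota 0 i ++ i :: iota i.+1 (j - i) ++ iota j.+1 (l - j.+1).
  have -> : l = i + (1 + ((j - i) + (l - j.+1))) by lia.
  rewrite !iotaD !add0n /= addn1.
  have -> : i.+1 + (j - i) = j.+1 by lia.
  by congr (_ ++ _ :: _ ++ iota _ _); lia.
rewrite [in LHS]e2 [in RHS]e1 !map_cat !count_cat /=.
have eA : map (bead la l) (iota 0 i) = map (bead mu l) (iota 0 i).
  apply/eq_in_map => k; rewrite mem_iota add0n => /andP[_ hk].
  by rewrite !beadE ?h1 //; try lia; left.
have eD : map (bead la l) (iota j.+1 (l - j.+1)) = map (bead mu l) (iota j.+1 (l - j.+1)).
  apply/eq_in_map => k; rewrite mem_iota => /andP[hk1 hk2].
  by rewrite !beadE ?h1 //; try lia; right.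
have eB : map (bead la l) (iota i.+1 (j - i)) = map (bead mu l) (iota i (j - i)).
  rewrite -add1n iotaDl -map_comp; apply/eq_in_map => k; rewrite mem_iota => /andP[hk1 hk2] /=.
  rewrite add1n !beadE; try lia.
  have := h2 k; lia.
have eC : bead la l i = bead mu l j + t.
  rewrite !beadE; lia.
rewrite !map_cat !count_cat eA eB eD eC modnDr; congr (_ + _); exact: addnCA.
Qed.

Lemma geq_trans : transitive geq.
Proof. by move=> a b c /= h1 h2; apply: leq_trans h2 h1. Qed.

Lemma filter_pos_nth s k : sorted geq s ->
  nth 0 [seq x <- s | 0 < x] k = nth 0 s k.
Proof.
elim: s k => [|a s IH] k //= hs.
have hs' : sorted geq s by apply: path_sorted hs.
case: (posnP a) => [a0|apos].
  have /allP z := order_path_min geq_trans hs.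
  have -> : [seq x <- s | 0 < x] = [::].
    apply/nilP; rewrite /nilp size_filter -leqn0 leqNgt -has_count.
    by apply/hasP => [[x /z /= + hx]]; rewrite a0; lia.
  case: k => [|k] /=; first by rewrite a0.
  case: (ltnP k (size s)) => hk; last by rewrite !nth_default.
  by have := z _ (mem_nth 0 hk); rewrite a0 /=; lia.
by case: k => [|k] //=; apply: IH.
Qed.

Lemma is_partition_filter s : sorted geq s -> is_partition [seq x <- s | 0 < x].
Proof.
move=> hs; rewrite /is_partition sorted_filter //; first by apply/allP => x; rewrite mem_filter => /andP[].
exact: geq_trans.
Qed.

Definition reach (s : seq (nat * nat)) u v :=
  exists p : seq (nat * nat), [&& path adj_cell u p, all (mem s) p & last u p == v].

Lemma reach_refl s u : reach s u u.
Proof. by exists [::]; rewrite /= eqxx. Qed.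

Lemma reach_trans s u v w : reach s u v -> reach s v w -> reach s u w.
Proof.
move=> [p1 /and3P[h1 h2 /eqP h3]] [p2 /and3P[h4 h5 h6]]; exists (p1 ++ p2).
by rewrite cat_path all_cat last_cat h3 h1 h2 h4 h5 h6.
Qed.

Lemma reach_step s u v : adj_cell u v -> v \in s -> reach s u v.
Proof. by move=> h1 h2; exists [:: v]; rewrite /= h1 h2 eqxx. Qed.

Lemma adj_sym u v : adj_cell u v = adj_cell v u.
Proof. by case: u v => [a b] [c d]; rewrite /adj_cell /=; apply/idP/idP; lia. Qed.

Lemma reach_sym_path s p u : u \in s -> path adj_cell u p -> all (mem s) p ->
  reach s (last u p) u.
Proof.
elim: p u => [|v p IH] u hu /=; first by move=> _ _; apply: reach_refl.
move=> /andP[huv hp] /andP[hv hall]; apply: reach_trans (IH v hv hp hall) _.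
by apply: reach_step; rewrite // adj_sym.
Qed.

Lemma reach_sym s u v : u \in s -> reach s u v -> reach s v u.
Proof. by move=> hu [p /and3P[h1 h2 /eqP <-]]; apply: reach_sym_path. Qed.

Section Construct.
Variables (t l : nat) (c : seq nat) (i j y : nat).
Hypotheses (t0 : 0 < t) (pc : is_partition c) (sc : size c <= l) (ij : i <= j) (jl : j < l)
  (hxi : bead c l i = y + t) (hyj : y < bead c l j)
  (hyj1 : j.+1 < l -> bead c l j.+1 < y).

Definition gmu k := if k < i then nth 0 c k else if k < j then (nth 0 c k.+1).-1
  else if k == j then y - (l - j.+1) else nth 0 c k.

Lemma gE1 k : k < i -> gmu k = nth 0 c k.
Proof. by rewrite /gmu => ->. Qed.
Lemma gE2 k : i <= k < j -> gmu k = (nth 0 c k.+1).-1.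
Proof. by case/andP=> h1 h2; rewrite /gmu ltnNge h1 h2. Qed.
Lemma gE3 : gmu j = y - (l - j.+1).
Proof. by rewrite /gmu ltnNge ij ltnn eqxx. Qed.
Lemma gE4 k : j < k -> gmu k = nth 0 c k.
Proof.
move=> h; rewrite /gmu; have -> : (k < i) = false by lia.
have -> : (k < j) = false by lia.
by have -> : (k == j) = false by lia.
Qed.

Lemma Cdec k : nth 0 c k.+1 <= nth 0 c k.
Proof. exact: part_le pc (leqnSn k). Qed.
Lemma Cbig k : l <= k -> nth 0 c k = 0.
Proof. by move=> h; rewrite nth_default //; lia. Qed.

Lemma ylow : l - j.+1 <= y.
Proof.
case: (ltnP j.+1 l) => h; last by lia.
by have := hyj1 h; rewrite beadE //; lia.
Qed.

Lemma Cj_pos : 0 < nth 0 c j.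
Proof. by have := ylow; have := hyj; rewrite beadE //; lia. Qed.

Lemma Cpos k : k <= j -> 0 < nth 0 c k.
Proof. by move=> h; apply: leq_trans Cj_pos (part_le pc h). Qed.

Lemma hxiE : nth 0 c i + (l - i.+1) = y + t.
Proof. by rewrite -beadE //; lia. Qed.
Lemma hyjE : y < nth 0 c j + (l - j.+1).
Proof. by rewrite -beadE. Qed.

Lemma gdec k : gmu k.+1 <= gmu k.
Proof.
have [h|h] := ltnP k.+1 i.
  by rewrite !gE1 ?Cdec //; lia.
have [h2|h2] := ltnP k i.
  have ei : i = k.+1 by lia.
  rewrite (gE1 h2).
  have [h3|h3] := ltnP k.+1 j.
    rewrite gE2 ?ei ?leqnn ?h3 //; have := Cdec k; have := Cdec k.+1; lia.
  have ej : j = k.+1 by lia.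
  rewrite -ej gE3; have := hyjE; have := Cdec k; rewrite ej; lia.
have [h3|h3] := ltnP k.+1 j.
  rewrite !gE2; try lia; have := Cdec k.+1; lia.
have [h4|h4] := ltnP k j.
  have ej : j = k.+1 by lia.
  rewrite -ej gE3 gE2; last by lia.
  have := hyjE; rewrite ej; lia.
have [h5|h5] := ltnP j k.
  by rewrite !gE4 ?Cdec //; lia.
have ek : k = j by lia.
rewrite ek gE4 // gE3; case: (ltnP j.+1 l) => h6.
  by have := hyj1 h6; rewrite beadE //; lia.
by rewrite Cbig //; lia.
Qed.

Lemma gle k : gmu k <= nth 0 c k.
Proof.
have [h|h] := ltnP k i; first by rewrite gE1.
have [h2|h2] := ltnP k j.
  by rewrite gE2 ?h ?h2 //; have := Cdec k; lia.
have [h3|h3] := ltnP j k; first by rewrite gE4.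
have ek : k = j by lia.
by rewrite ek gE3; have := hyjE; lia.
Qed.

Lemma gsucc k : nth 0 c k.+1 <= gmu k + 1.
Proof.
have [h|h] := ltnP k i; first by rewrite gE1 //; have := Cdec k; lia.
have [h2|h2] := ltnP k j; first by rewrite gE2 ?h ?h2 //; lia.
have [h3|h3] := ltnP j k; first by rewrite gE4 //; have := Cdec k; lia.
have ek : k = j by lia.
rewrite ek gE3; case: (ltnP j.+1 l) => h6.
  by have := hyj1 h6; rewrite beadE //; lia.
by rewrite Cbig //; lia.
Qed.

Lemma gstep k : i <= k < j -> gmu k + 1 = nth 0 c k.+1.
Proof. move=> h; rewrite gE2 //; have := Cpos (k := k.+1); lia. Qed.

Lemma gbig k : l <= k -> gmu k = 0.
Proof. by move=> h; rewrite gE4 ?Cbig //; lia. Qed.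

Definition mu := [seq x <- mkseq gmu l | 0 < x].

Lemma sorted_g : sorted geq (mkseq gmu l).
Proof.
rewrite /mkseq; apply: (homo_sorted (e := leq)); last exact: iota_sorted.
move=> a b hab /=; elim: b hab => [|b IH]; first by rewrite leqn0 => /eqP ->.
rewrite leq_eqVlt => /orP[/eqP->//|hab]; apply: leq_trans (gdec b) (IH hab).
Qed.

Lemma mu_nth k : nth 0 mu k = gmu k.
Proof.
rewrite filter_pos_nth ?sorted_g //.
case: (ltnP k l) => h; first by rewrite nth_mkseq.
by rewrite nth_default ?size_mkseq // gbig.
Qed.

Lemma mem_skew_mu u : (u \in skew_cells c mu) = (gmu u.1 <= u.2) && (u.2 < nth 0 c u.1).
Proof. by rewrite mem_skew mu_nth. Qed.

Lemma row_left k d z : z - gmu k = d -> gmu k <= z < nth 0 c k ->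
  reach (skew_cells c mu) (k, z) (k, gmu k).
Proof.
elim: d z => [|d IH] z hd hz.
  have -> : z = gmu k by lia.
  exact: reach_refl.
apply: (@reach_trans _ _ (k, z.-1)); last by apply: IH; lia.
by apply: reach_step; rewrite ?mem_skew_mu /adj_cell /=; lia.
Qed.

Lemma reach_end k z : (k, z) \in skew_cells c mu ->
  reach (skew_cells c mu) (k, z) (j, gmu j).
Proof.
suff: forall n k z, j - k < n -> (k, z) \in skew_cells c mu ->
  reach (skew_cells c mu) (k, z) (j, gmu j) by move=> H; apply: (H (j - k).+1).
elim=> [|n IH] {}k {}z hn; first by lia.
rewrite mem_skew_mu /= => /andP[hz1 hz2].
have hik : i <= k.
  rewrite leqNgt; apply/negP => h; move: hz1 hz2; rewrite gE1 //; lia.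
have hkj : k <= j.
  rewrite leqNgt; apply/negP => h; move: hz1 hz2; rewrite gE4 //; lia.
apply: (@reach_trans _ _ (k, gmu k)); first by apply: (@row_left _ (z - gmu k)); rewrite ?hz1.
case: (ltngtP k j) => hkj'; [| by lia | by rewrite hkj'; apply: reach_refl].
apply: (@reach_trans _ _ (k.+1, gmu k)).
  apply: reach_step; first by rewrite /adj_cell /=; lia.
  rewrite mem_skew_mu /= gdec /=; have := gstep (k := k); lia.
apply: IH; first by lia.
rewrite mem_skew_mu /= gdec /=; have := gstep (k := k); lia.
Qed.

Lemma mu_rim : rim_hook_removal t c mu.
Proof.
have smu : size mu <= l by rewrite /mu size_filter; apply: leq_trans (count_size _ _) _; rewrite size_mkseq.
split.
- exact: is_partition_filter sorted_g.
- by move=> k; rewrite mu_nth gle.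
- rewrite (@sumn_nth c l) // (@sumn_nth mu l) //.
  rewrite (@sum_sub (nth 0 c) (nth 0 mu)); last by move=> k; rewrite mu_nth gle.
  congr (_ + _).
  rewrite (@big_cat_nat _ _ _ i) //=; last by lia.
  rewrite (@big_cat_nat _ _ _ j.+1 i) //=; last by lia.
  rewrite (@big1_seq _ _ _ _ (index_iota 0 i)); last first.
    by move=> k /andP[_]; rewrite mem_index_iota => hk; rewrite mu_nth gE1 ?subnn //; lia.
  rewrite (@big1_seq _ _ _ _ (index_iota j.+1 l)); last first.
    by move=> k /andP[_]; rewrite mem_index_iota => hk; rewrite mu_nth gE4 ?subnn //; lia.
  have ej : j = i + (j - i) by lia.
  rewrite add0n addn0 {1}ej (@tele (nth 0 c) (nth 0 mu) i (j - i)) -?ej //.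
  + rewrite mu_nth gE3; have := hxiE; have := ylow; have := hyjE; have := part_le pc ij; lia.
  + by move=> k hk; rewrite mu_nth; apply: gstep; lia.
  + by move=> k; rewrite mu_nth gle.
  + exact: Cdec.
- move=> a b ha hb.
  case: a ha => a1 a2 ha; case: b hb => b1 b2 hb.
  have hra := reach_end ha; have hrb := reach_end hb.
  exact: reach_trans hra (reach_sym hb hrb).
- move=> [k [z [h1 h2 h3 h4]]]; move: h1 h4; rewrite !mem_skew_mu /=.
  have := gsucc k; lia.
Qed.

End Construct.

Lemma core_closed t c l : 0 < t -> is_partition c -> size c <= l -> is_tcore t c ->
  forall x, x \in bs c l -> t <= x -> x - t \in bs c l.
Proof.
move=> t0 pc sc core x hx tx; apply/negPn/negP => hn; apply: core.
move: hx; rewrite mem_bs => /hasP[i]; rewrite mem_iota add0n => /andP[_ hi] /eqP hxi.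
pose y := x - t.
pose P k := (k < l) && (y < bead c l k).
have exP : exists k, P k by exists i; rewrite /P hi hxi /y; lia.
have ubP : forall k, P k -> k <= l by move=> k /andP[h _]; lia.
case: (ex_maxnP exP ubP) => j /andP[jl hyj] maxj.
have ij : i <= j by apply: maxj; rewrite /P hi hxi /y; lia.
have hyj1 : j.+1 < l -> bead c l j.+1 < y.
  move=> h; rewrite ltn_neqAle; apply/andP; split.
    apply/negP => /eqP e; apply: (negP hn); rewrite mem_bs; apply/hasP; exists j.+1.
      by rewrite mem_iota; lia.
    by rewrite e.
  rewrite leqNgt; apply/negP => h2; have := maxj j.+1; rewrite /P h h2 /=; lia.
exists (mu l c i j y); apply: mu_rim => //.
by rewrite hxi /y subnK.
Qed.

Lemma gtn_trans : transitive gtn.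
Proof. by move=> a b c /= h1 h2; apply: ltn_trans h2 h1. Qed.

Lemma sorted_gtn_map (f : nat -> nat) a n :
  (forall i, a <= i -> i.+1 < a + n -> f i.+1 < f i) ->
  sorted gtn [seq f i | i <- iota a n].
Proof.
elim: n a => [|n IH] a //= h.
case: n IH h => [|n] IH h //=.
apply/andP; split; first by apply: h; lia.
by have := IH a.+1; rewrite /=; apply => i h1 h2; apply: h; lia.
Qed.

Lemma conj_count s i k : 0 < i -> sorted geq s ->
  (k < count (fun x => i <= x) s) = (i <= nth 0 s k).
Proof.
move=> i0; elim: s k => [|a s IH] k /= hs; first by rewrite nth_nil; lia.
have hs' := path_sorted hs.
have /allP hall := order_path_min (fun a b c h1 h2 => leq_trans h2 h1) hs.
case: (leqP i a) => hia /=.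
  by case: k => [|k] //=; rewrite add1n ltnS IH.
have -> : count (fun x => i <= x) s = 0.
  apply/eqP; rewrite -leqn0 leqNgt -has_count; apply/hasP => [[x /hall /= hx hx2]]; lia.
rewrite add0n; case: k => [|k] /=; first by apply/idP/idP; lia.
case: (ltnP k (size s)) => hk; last by rewrite nth_default //; apply/idP/idP; lia.
have h : nth 0 s k <= a := hall _ (mem_nth 0 hk); apply/idP/idP; lia.
Qed.

Section Frob.
Variables (c : seq nat) (l : nat).
Hypotheses (pc : is_partition c) (sc : size c <= l).

Lemma rkP j : 0 < j -> (j <= rk c) = (j <= nth 0 c j.-1).
Proof.
move=> j0; apply/idP/idP => h.
- apply: contraLR h; rewrite -!ltnNge => h.
  suff : rk c <= j.-1 by lia.
  apply/bigmax_leqP_seq => k _; rewrite /part => hk.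
  case: (ltnP k j) => hkj; first by lia.
  have := part_le pc (_ : j.-1 <= k.-1); lia.
- apply: (bigmaxn_sup_seq j) => //.
  rewrite mem_index_iota /=; have : 0 < nth 0 c j.-1 by lia.
  rewrite part_pos //; lia.
Qed.

Lemma rk_size : rk c <= size c.
Proof. by apply/bigmax_leqP_seq => k; rewrite mem_index_iota; lia. Qed.

Lemma rk_l : rk c <= l.
Proof. by apply: leq_trans rk_size sc. Qed.

Lemma bead_ge k : k < l -> (l <= bead c l k) = (k < rk c).
Proof. by move=> kl; rewrite beadE // (rkP (j := k.+1)) //=; lia. Qed.

Lemma mem_arm a : (a \in frob_arm c) = (l + a \in bs c l).
Proof.
apply/mapP/idP => [[i]|].
  rewrite mem_iota => /andP[i1 i2] ->; rewrite mem_bs; apply/hasP; exists i.-1.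
    by rewrite mem_iota; have := rk_l; lia.
  have := rkP i1; rewrite (_ : i <= rk c); last by lia.
  rewrite beadE /part; last by have := rk_l; lia.
  move/esym => h; suff e : nth 0 c i.-1 + (l - i.-1.+1) = l + (nth 0 c i.-1 - i) by rewrite e.
  have := rk_l; lia.
rewrite mem_bs => /hasP[k]; rewrite mem_iota add0n => /andP[_ kl] /eqP e.
have : k < rk c by rewrite -bead_ge // e; lia.
move=> hk; exists k.+1; first by rewrite mem_iota; lia.
move: e; rewrite beadE // /part /=; lia.
Qed.

Lemma arm_sorted : sorted gtn (frob_arm c).
Proof.
apply: sorted_gtn_map => i h1 h2; rewrite /part /=.
have := rkP (j := i.+1) erefl; rewrite (_ : i.+1 <= rk c); last by lia.
move/esym => /= h; have := part_le pc (leqnSn i.-1); rewrite prednK //; lia.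
Qed.

Lemma size_arm : size (frob_arm c) = rk c.
Proof. by rewrite size_map size_iota. Qed.

Lemma size_leg : size (frob_leg c) = rk c.
Proof. by rewrite size_map size_iota. Qed.

Lemma sc' : sorted geq c.
Proof. by case/andP: pc. Qed.

Lemma conj_ge i : 0 < i -> i <= rk c -> i <= conj_part c i.
Proof.
move=> i0 ir; have := conj_count i.-1 i0 sc'; rewrite /conj_part.
have := rkP i0; rewrite ir => /esym ->; lia.
Qed.

Lemma leg_sorted : sorted gtn (frob_leg c).
Proof.
apply: sorted_gtn_map => i h1 h2.
have := conj_ge (i := i.+1) erefl; rewrite (_ : i.+1 <= rk c); last by lia.
have : conj_part c i.+1 <= conj_part c i.
  by apply: sub_count => x /=; lia.
lia.
Qed.

Lemma leg_gap i : 0 < i -> i <= rk c ->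
  conj_part c i - i < l /\ l.-1 - (conj_part c i - i) \notin bs c l.
Proof.
move=> i0 ir; have hp := conj_ge i0 ir.
have pl : conj_part c i <= l by apply: leq_trans (count_size _ _) sc.
split; first by lia.
rewrite mem_bs; apply/hasPn => k; rewrite mem_iota add0n => /andP[_ kl].
have := conj_count k i0 sc'; rewrite -/(conj_part c i) beadE //.
case: (ltnP k (conj_part c i)) => hk /esym h; lia.
Qed.

Lemma leg_uniq : uniq (frob_leg c).
Proof. by apply: (sorted_uniq gtn_trans) leg_sorted => x; rewrite /= ltnn. Qed.

Lemma arm_uniq : uniq (frob_arm c).
Proof. by apply: (sorted_uniq gtn_trans) arm_sorted => x; rewrite /= ltnn. Qed.

Lemma mem_leg x : (x \in frob_leg c) = (x < l) && (l.-1 - x \notin bs c l).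
Proof.
pose G := [seq y <- iota 0 l | l.-1 - y \notin bs c l].
have sub : {subset frob_leg c <= G}.
  move=> y /mapP[i]; rewrite mem_iota => /andP[i1 i2] ->.
  have hi : i <= rk c by lia.
  have [h1 h2] := leg_gap i1 hi.
  by rewrite mem_filter h2 mem_iota.
have szG : size G <= rk c.
  pose H := [seq l.-1 - bead c l k | k <- iota (rk c) (l - rk c)].
  have uH : uniq H.
    rewrite map_inj_in_uniq ?iota_uniq // => a b; rewrite !mem_iota => ha hb e.
    have la : bead c l a < l by rewrite ltnNge bead_ge; lia.
    have lb : bead c l b < l by rewrite ltnNge bead_ge; lia.
    apply: (bead_inj pc (_ : a < l) (_ : b < l)); lia.
  have subH : {subset H <= [seq y <- iota 0 l | l.-1 - y \in bs c l]}.
    move=> y /mapP[k]; rewrite mem_iota => hk ->.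
    have lk : bead c l k < l by rewrite ltnNge bead_ge; lia.
    rewrite mem_filter mem_iota; apply/andP; split; last by lia.
    rewrite (_ : l.-1 - (l.-1 - bead c l k) = bead c l k); last by lia.
    by rewrite mem_bs; apply/hasP; exists k => //; rewrite mem_iota; lia.
  have := uniq_leq_size uH subH; rewrite size_map size_iota size_filter.
  have := count_predC (fun y => l.-1 - y \in bs c l) (iota 0 l).
  rewrite size_iota /G size_filter (@eq_count _ (predC _) (fun y => l.-1 - y \notin bs c l)) //; have := rk_l; move: (count (fun y => l.-1 - y \in bs c l) (iota 0 l)) (count (fun y => l.-1 - y \notin bs c l) (iota 0 l)) => A B. lia.
have hsz : size G <= size (frob_leg c) by rewrite size_leg.
have [_ e] := uniq_min_size leg_uniq sub hsz.
by rewrite e mem_filter mem_iota andbC.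
Qed.

End Frob.

Lemma rem_idx (A : seq nat) a0 : uniq A -> a0 \in A ->
  [/\ (forall y, (y \in take (index a0 A) A ++ drop (index a0 A).+1 A) = (y \in A) && (y != a0)),
      size (take (index a0 A) A ++ drop (index a0 A).+1 A) = (size A).-1 &
      subseq (take (index a0 A) A ++ drop (index a0 A).+1 A) A].
Proof.
move=> uA hA; set i := index a0 A.
have hi : i < size A by rewrite index_mem.
have e : A = take i A ++ a0 :: drop i.+1 A.
  by rewrite -{1}(nth_index 0 hA) -drop_nth // cat_take_drop.
split.
- move=> y; have u' := uA; rewrite e cat_uniq /= in u'.
  move: u' => /and4P[_ hh h3 _].
  rewrite {3}e !mem_cat in_cons.
  case: (eqVneq y a0) => [->|ne] /=; last by rewrite andbT.
  move: hh; rewrite negb_or => /andP[h1 h2].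
  by rewrite andbF (negbTE h1) (negbTE h3).
- rewrite size_cat size_take hi size_drop; lia.
- by rewrite {3}e; apply: cat_subseq (subseq_refl _) (subseq_cons _ _).
Qed.

Lemma sorted_rcons_gtn (s : seq nat) x : sorted gtn s -> all (fun a => x < a) s ->
  sorted gtn (rcons s x).
Proof.
case: s => [|a s] //= hs /andP[ha hall].
rewrite rcons_path hs /=.
have := mem_last a s; rewrite in_cons => /orP[/eqP->//|h].
by move/allP: hall => /(_ _ h).
Qed.

Lemma asym_iff c l : is_partition c -> size c <= l -> 0 < l ->
  (exists k, 1 <= k <= rk c /\ asymmetric 1 0 k c) <->
  (l.-1 \notin bs c l /\
   forall d, 0 < d -> d <= l.-1 -> l.-1 - d \notin bs c l -> l.-1 + d \in bs c l).
Proof.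
move=> pc sc l0; split.
- move=> [k [hk [_ [_ [alpha [salpha szalpha harm hleg]]]]]].
  split.
    have : 0 \in frob_leg c by rewrite hleg mem_rcons in_cons eqxx.
    by rewrite (mem_leg pc sc) subn0 => /andP[].
  move=> d d0 dl hn.
  have : d \in frob_leg c by rewrite (mem_leg pc sc) hn andbT; lia.
  rewrite hleg mem_rcons in_cons (_ : (d == 0) = false) /=; last by lia.
  move=> /mapP[a ha ->].
  have : a \in frob_arm c.
    by rewrite harm; move: ha; rewrite mem_cat => /orP[/mem_take|/mem_drop].
  rewrite (mem_arm pc sc); rewrite (_ : l + a = l.-1 + (a + 1)) //; lia.
- move=> [h0 hd].
  set A := frob_arm c; set L := frob_leg c.
  have L0 : 0 \in L by rewrite (mem_leg pc sc) subn0 h0 l0.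
  have Lsub : forall x : nat, x \in L -> x != 0 -> x.-1 \in A.
    move=> x; rewrite (mem_leg pc sc) => /andP[xl hx] x0.
    have := hd x (_ : 0 < x) (_ : x <= l.-1) hx.
    rewrite (mem_arm pc sc) (_ : l + x.-1 = l.-1 + x) //; lia.
  pose T := [seq x.-1 | x <- L & x != 0].
  have uL : uniq L := leg_uniq pc sc.
  have uA : uniq A := arm_uniq pc sc.
  have r0 : 0 < rk c.
    by rewrite -(size_leg c) -/L -has_predT; apply/hasP; exists 0.
  have szT : size T = (rk c).-1.
    rewrite size_map size_filter -(size_leg c) -/L.
    have := count_predC (pred1 0) L; rewrite (count_uniq_mem _ uL) L0.
    by rewrite (@eq_count _ (predC (pred1 0)) (fun x => x != 0)) // add1n => <-.
  have [a0 ha0 hT] : exists2 a0, a0 \in A & a0 \notin T.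
    case: (boolP (all (fun a => a \in T) A)) => [/allP hall | /allPn [a0 ha0 hT]].
      have := uniq_leq_size uA hall; rewrite szT size_arm; lia.
    by exists a0.
  have [hmem hsz hsub] := rem_idx uA ha0.
  have hidx : index a0 A < rk c by rewrite -(size_arm c) index_mem.
  exists (index a0 A).+1; split; first by lia.
  split; first by [].
  split; first by lia.
  exists A; split => //.
  - exact: arm_sorted.
  - exact: size_arm.
  rewrite /= -/L.
  set R := rcons _ 0.
  have LR : {subset L <= R}.
    move=> x hx; rewrite mem_rcons in_cons.
    case: (eqVneq x 0) => [->|x0] //=.
    apply/mapP; exists x.-1; last by lia.
    rewrite hmem Lsub //=; apply/eqP => e; move/negP: hT; apply.
    by rewrite -e; apply: map_f; rewrite mem_filter x0.
  have szR : size R <= size L.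
    rewrite size_rcons size_map hsz size_arm size_leg; lia.
  have [_ eLR] := uniq_min_size uL LR szR.
  apply: (irr_sorted_eq gtn_trans) => //.
  - by move=> x; rewrite /= ltnn.
  - exact: leg_sorted.
  - apply: sorted_rcons_gtn.
      rewrite sorted_map.
      apply: (@sub_sorted _ gtn) => [a b /=|]; first by lia.
      apply: (subseq_sorted _ hsub); [exact: gtn_trans | exact: arm_sorted pc sc].
    by apply/allP => x /mapP[a _ ->]; lia.
Qed.

Section Closed.
Variables (t : nat) (B : seq nat).
Hypotheses (t0 : 0 < t) (uB : uniq B)
  (cl : forall x, x \in B -> t <= x -> x - t \in B).

Lemma descent q x : x + q * t \in B -> x \in B.
Proof.
elim: q x => [|q IH] x; first by rewrite mul0n addn0.
move=> h; apply: IH; have := cl h (_ : t <= x + q.+1 * t); rewrite mulSn.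
by rewrite (_ : x + (t + q * t) - t = x + q * t) //; lia.
Qed.

Definition Ncnt r := count (fun y => y %% t == r) B.

Lemma closed_char x : (x \in B) = (x %/ t < Ncnt (x %% t)).
Proof.
have ex := divn_eq x t.
apply/idP/idP => hx.
- pose S := [seq x %% t + q * t | q <- iota 0 (x %/ t).+1].
  have uS : uniq S.
    rewrite map_inj_uniq ?iota_uniq // => a b /eqP; rewrite eqn_add2l eqn_pmul2r //.
    by move/eqP.
  have sub : {subset S <= [seq y <- B | y %% t == x %% t]}.
    move=> y /mapP[q]; rewrite mem_iota => /andP[_ hq] ->.
    rewrite mem_filter addnC modnMDl modn_mod eqxx /=.
    apply: (@descent (x %/ t - q)); rewrite (_ : _ + _ = x) // mulnBl.
    have : q * t <= x %/ t * t by rewrite leq_mul2r; lia.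
    lia.
  by have := uniq_leq_size uS sub; rewrite size_map size_iota size_filter.
- apply: contraLR hx; rewrite -leqNgt => hx.
  pose S := [seq x %% t + q * t | q <- iota 0 (x %/ t)].
  have sub : {subset [seq y <- B | y %% t == x %% t] <= S}.
    move=> y; rewrite mem_filter => /andP[/eqP hy yB].
    have ey := divn_eq y t.
    apply/mapP; exists (y %/ t); last by rewrite -hy addnC.
    rewrite mem_iota /= add0n ltnNge; apply/negP => hq; apply: (negP hx).
    apply: (@descent (y %/ t - x %/ t)).
    rewrite (_ : x + (y %/ t - x %/ t) * t = y) // mulnBl.
    have : x %/ t * t <= y %/ t * t by rewrite leq_mul2r; lia.
    lia.
  have := uniq_leq_size (filter_uniq _ uB) sub; rewrite size_map size_iota size_filter.
  by [].
Qed.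

End Closed.

Lemma sum_count_mod (s : seq nat) t : 0 < t ->
  \sum_(0 <= r < t) count (fun x => x %% t == r) s = size s.
Proof.
move=> t0; elim: s => [|x s IH] /=; first by rewrite big1.
rewrite big_split /= IH.
have -> : \sum_(0 <= r < t) (x %% t == r) = 1.
  rewrite (eq_bigr (fun r => if r == x %% t then 1 else 0)); last first.
    by move=> r _; rewrite eq_sym; case: eqP.
  by rewrite -big_mkcond big_nat1_eq /= ltn_pmod.
by rewrite add1n.
Qed.

Section BN.
Variables (t n : nat) (N : nat -> nat) (inB : nat -> bool).
Hypotheses (t0 : 0 < t) (n0 : 0 < n) (hB : forall x, inB x = (x %/ t < N (x %% t))).

Lemma inBE q r : r < t -> inB (q * t + r) = (q < N r).
Proof.
by move=> rt; rewrite hB divnMDl // divn_small // addn0 modnMDl modn_small.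
Qed.

Lemma bN :
  (~~ inB (t * n) /\ forall d, 0 < d -> d <= t * n -> ~~ inB (t * n - d) -> inB (t * n + d)) <->
  (N 0 = n /\ forall r, 0 < r < t -> N (t - r) < n -> 2 * n <= N r + N (t - r)).
Proof.
split.
- move=> [h0 hd].
  have hN0le : N 0 <= n.
    by move: h0; rewrite (_ : t * n = n * t + 0) ?inBE //; lia.
  have hN0ge : n <= N 0.
    have : inB (t * n - t).
      apply/negPn/negP => hn.
      have := hd t t0 (_ : t <= t * n) hn.
      rewrite (_ : t * n + t = (n + 1) * t + 0) ?inBE //; try lia.
      by move=> h; have := h (leq_pmulr _ n0); lia.
    rewrite (_ : t * n - t = (n - 1) * t + 0) ?inBE //; first by lia.
    rewrite addn0 mulnBl mul1n mulnC //.
  split; first by lia.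
  move=> r /andP[r0 rt] hlt.
  set N' := N (t - r).
  have [m em] : exists m, n = m + N'.+1 by exists (n - N'.+1); lia.
  have := hd (m * t + r) (_ : 0 < m * t + r) (_ : m * t + r <= t * n).
  rewrite (_ : t * n - (m * t + r) = N' * t + (t - r)); last by rewrite em; nia.
  rewrite inBE; last by lia.
  rewrite ltnn (_ : t * n + (m * t + r) = (n + m) * t + r); last by nia.
  rewrite inBE //; move=> h.
  have h1 : 0 < m * t + r by lia.
  have h2 : m * t + r <= t * n by rewrite em; nia.
  have := h h1 h2 isT; lia.
- move=> [hN0 hp]; split.
    by rewrite (_ : t * n = n * t + 0) ?inBE ?hN0 ?ltnn //; lia.
  move=> d d0 dle hn.
  have ed := divn_eq d t.
  have rt : d %% t < t by rewrite ltn_pmod.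
  move: ed hn rt; set q := d %/ t; set r := d %% t => ed hn rt.
  case: (posnP r) => [r0|r0].
    have q0 : 0 < q by move: ed; rewrite r0; nia.
    have qn : q <= n by nia.
    move: hn; rewrite (_ : t * n - d = (n - q) * t + 0); last by rewrite ed r0 mulnBl; nia.
    by rewrite inBE // hN0; lia.
  have qn : q < n by nia.
  move: hn; rewrite (_ : t * n - d = (n - q - 1) * t + (t - r)); last by nia.
  rewrite inBE; last by lia.
  move=> hn; have := hp r (_ : 0 < r < t) (_ : N (t - r) < n); try lia.
  move=> h2.
  rewrite (_ : t * n + d = (n + q) * t + r); last by nia.
  by rewrite inBE //; lia.
Qed.

End BN.

Lemma sub_sum (r s : seq nat) (e : nat -> nat) : uniq s -> uniq r -> {subset s <= r} ->
  \sum_(i <- s) e i <= \sum_(i <- r) e i.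
Proof.
elim: s r => [|a s IH] r; first by rewrite big_nil.
move=> /= /andP[nas us] ur sub.
rewrite big_cons (@bigD1_seq _ _ _ _ r a) ?sub ?mem_head // leq_add2l.
rewrite -[X in _ <= X]big_filter.
apply: IH => //; first exact: filter_uniq.
move=> x hx; rewrite mem_filter sub ?in_cons ?hx ?orbT // andbT.
by apply/eqP => e'; move: nas; rewrite -e' hx.
Qed.

Section Na.
Variables (t n : nat) (N : nat -> nat).
Hypotheses (t1 : 1 < t) (n0 : 0 < n) (hsumN : \sum_(0 <= r < t) N r = t * n + 1).

Lemma Na :
  (exists i0, [/\ 1 <= i0 <= t %/ 2, N 0 = n &
     forall i, 1 <= i <= t %/ 2 -> N i + N (t - i) =
       (if i == i0 then 2 * n + 1 + (~~ odd t && (i0 == t %/ 2)) else 2 * n)]) <->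
  (N 0 = n /\ forall r, 0 < r < t -> N (t - r) < n -> 2 * n <= N r + N (t - r)).
Proof.
split.
- move=> [i0 [hi0 hN0 hall]]; split => // r /andP[r0 rt] _.
  case: (leqP r (t %/ 2)) => hr.
    have hr' : 1 <= r <= t %/ 2 by lia.
    have := hall r hr'; case: (r == i0) => /= h; lia.
  have hr' : 1 <= t - r <= t %/ 2 by lia.
  have := hall (t - r) hr'.
  rewrite (_ : t - (t - r) = r); last by lia.
  case: (t - r == i0) => /= h; lia.
- move=> [hN0 hp].
  have hpair : forall r, 0 < r < t -> 2 * n <= N r + N (t - r).
    move=> r hr; case: (ltnP (N (t - r)) n) => h1; first exact: hp.
    case: (ltnP (N r) n) => h2; last by lia.
    have := hp (t - r) (_ : 0 < t - r < t); rewrite (_ : t - (t - r) = r); lia.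
  pose e r := N r + N (t - r) - 2 * n.
  have esym : forall r, 0 < r < t -> e (t - r) = e r.
    by move=> r hr; rewrite /e (_ : t - (t - r) = r); lia.
  have hsum : \sum_(1 <= r < t) e r = 2.
    have h1 : \sum_(0 <= r < t) N r = N 0 + \sum_(1 <= r < t) N r by rewrite big_ltn //; lia.
    have h2 : \sum_(1 <= r < t) N (t - r) = \sum_(1 <= r < t) N r.
      rewrite big_nat_rev; apply: eq_big_nat => i hi; congr N; lia.
    have h3 : \sum_(1 <= r < t) (e r + 2 * n) = \sum_(1 <= r < t) (N r + N (t - r)).
      apply: eq_big_nat => i hi; have := hpair i (_ : 0 < i < t); rewrite /e; lia.
    move: h3; rewrite !big_split /= h2 !sum_nat_const_nat; move: h1; rewrite hsumN hN0.
    nia.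
  have bnd : forall a b c, 0 < a < t -> 0 < b < t -> 0 < c < t -> a != b -> a != c -> b != c ->
      e a + e b + e c <= 2.
    move=> a b c ha hb hc ab ac bc; rewrite -hsum.
    have := @sub_sum (index_iota 1 t) [:: a; b; c] e.
    rewrite !big_cons big_nil addn0 addnA; apply.
    - by rewrite /= !inE negb_or ab ac bc.
    - exact: iota_uniq.
    - by move=> x; rewrite !inE mem_index_iota => /or3P[] /eqP ->; lia.
  have bnd2 : forall a b, 0 < a < t -> 0 < b < t -> a != b -> e a + e b <= 2.
    move=> a b ha hb ab; rewrite -hsum.
    have := @sub_sum (index_iota 1 t) [:: a; b] e.
    rewrite !big_cons big_nil addn0; apply.
    - by rewrite /= !inE ab.
    - exact: iota_uniq.
    - by move=> x; rewrite !inE mem_index_iota => /orP[] /eqP ->; lia.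
  have bnd1 : forall a, 0 < a < t -> e a <= 2.
    move=> a ha; rewrite -hsum.
    have := @sub_sum (index_iota 1 t) [:: a] e.
    rewrite !big_cons big_nil addn0; apply => //.
    - exact: iota_uniq.
    - by move=> x; rewrite !inE mem_index_iota => /eqP ->; lia.
  have [r1 hr1 er1] : exists2 r1, 0 < r1 < t & 0 < e r1.
    case: (boolP (has (fun r => 0 < e r) (index_iota 1 t))) => [/hasP[r]|/hasPn h].
      by rewrite mem_index_iota => hr er; exists r.
    exfalso; move: hsum; rewrite big1_seq //.
    by move=> i /andP[_ hi]; have := h i hi; lia.
  pose i0 := minn r1 (t - r1).
  have hi0 : 1 <= i0 <= t %/ 2 by rewrite /i0; lia.
  have ei0 : 0 < e i0.
    have : i0 = r1 \/ i0 = t - r1 by rewrite /i0; lia.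
    by case => ->; rewrite ?esym.
  have hti0 : 0 < t - i0 < t by lia.
  have hi0t : 0 < i0 < t by lia.
  exists i0; split => // i hi.
  have hit : 0 < i < t by lia.
  have eq1 : N i + N (t - i) = e i + 2 * n by have := hpair i hit; rewrite /e; lia.
  rewrite eq1.
  case: (eqVneq (2 * i0) t) => h2.
  + have e2 : e i0 = 2.
      have := bnd1 i0 hi0t; move: ei0; rewrite /e (_ : t - i0 = i0); lia.
    have -> : (~~ odd t && (i0 == t %/ 2)) = true by apply/andP; split; lia.
    case: (eqVneq i i0) => [->|ne] /=; first by lia.
    have := bnd2 i i0 hit hi0t ne; lia.
  + have e1 : e i0 = 1.
      have := bnd2 i0 (t - i0) hi0t hti0 (_ : i0 != t - i0); rewrite esym //; lia.
    have -> : (~~ odd t && (i0 == t %/ 2)) = false by apply/negP => /andP[]; lia.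
    case: (eqVneq i i0) => [->|ne] /=; first by lia.
    have := bnd i i0 (t - i0) hit hi0t hti0 ne (_ : i != t - i0) (_ : i0 != t - i0).
    rewrite esym //; lia.
Qed.

End Na.

Lemma hooks_nres t la c l : 0 < t -> hooks_removed t la c -> is_partition la -> size la <= l ->
  [/\ is_partition c, size c <= l & forall r, nres t la l r = nres t c l r].
Proof.
move=> t0; elim => [la0|la0 mu nu rh _ IH] p s; first by split.
have [pmu _ _ _ _] := rh.
have smu : size mu <= l.
  apply: leq_trans (size_sub pmu _) s; by case: rh.
have [pn sn hn] := IH pmu smu; split => // r.
by rewrite (rim_nres t0 p s rh) hn.
Qed.

Theorem corollary3p7 (t n : nat) (la : seq nat) :
  2 <= t -> 1 <= n -> is_partition la -> size la <= t * n + 1 ->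
  forall c : seq nat, tcore_of t la c ->
  ((exists i0, [/\ 1 <= i0 <= t %/ 2,
       nres t la (t * n + 1) 0 = n &
       forall i, 1 <= i <= t %/ 2 ->
         nres t la (t * n + 1) i + nres t la (t * n + 1) (t - i) =
         (if i == i0 then 2 * n + 1 + (~~ odd t && (i0 == t %/ 2))
          else 2 * n)])
   <->
   (exists k, 1 <= k <= rk c /\ asymmetric 1 0 k c)).
Proof.
move=> t2 n1 pla sla c [hr core].
have t0 : 0 < t by lia.
have [pc sc hN] := hooks_nres t0 hr pla sla.
set l := t * n + 1 in sla sc hN *.
have l0 : 0 < l by rewrite /l addn1.
have hA : (exists i0, [/\ 1 <= i0 <= t %/ 2,
       nres t la l 0 = n &
       forall i, 1 <= i <= t %/ 2 ->
         nres t la l i + nres t la l (t - i) =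
         (if i == i0 then 2 * n + 1 + (~~ odd t && (i0 == t %/ 2))
          else 2 * n)]) <->
   (exists i0, [/\ 1 <= i0 <= t %/ 2,
       nres t c l 0 = n &
       forall i, 1 <= i <= t %/ 2 ->
         nres t c l i + nres t c l (t - i) =
         (if i == i0 then 2 * n + 1 + (~~ odd t && (i0 == t %/ 2))
          else 2 * n)]).
  split => [[i0 [h1 h2 h3]]|[i0 [h1 h2 h3]]]; exists i0; split => //.
  - by rewrite -hN.
  - by move=> i hi; rewrite -!hN; exact: h3.
  - by rewrite hN.
  - by move=> i hi; rewrite !hN; exact: h3.
rewrite hA.
have hsum : \sum_(0 <= r < t) nres t c l r = t * n + 1.
  rewrite (eq_big_nat _ _ (fun r _ => nres_bs t c l r)) sum_count_mod //.
  by rewrite size_bs.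
rewrite (Na (N := nres t c l) t2 n1 hsum).
have cl := core_closed t0 pc sc core.
have hB : forall x, (x \in bs c l) = (x %/ t < nres t c l (x %% t)).
  by move=> x; rewrite (closed_char t0 (uniq_bs l pc) cl) nres_bs.
rewrite -(bN (inB := fun x => x \in bs c l) t0 n1 hB).
rewrite (asym_iff pc sc l0).
have -> : l.-1 = t * n by rewrite /l addn1.
by [].
Qed.
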